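(* Let $(x,y)\in\mathbb{R}^n\times\mathbb{R}$ be random variables with joint distribution $\mu$, and let $J(w)=\frac{1}{2}\mathbb{E}_{(x,y)\sim\mu}(y-x^Tw)^2$ for $w\in\mathbb{R}^n$, with $w^*$ an optimal solution of $\min_w J(w)$. Let $\epsilon>0$ be a stepsize with $\max_i(1-\epsilon\lambda_i(\mathbb{E}xx^T))^2<1$ ($\lambda_i(\cdot)$ the eigenvalues). Fix $\lambda>0$ and an initial vector $w_0\in\mathbb{R}^n$. At each iteration $k$, two agents $i=1,2$ produce stochastic gradients $g_k^1,g_k^2$; suppose that, given $w_k$, $g_k^1,g_k^2$ are independent random variables each with mean $\nabla J(w_k)$ and covariance $G$ (the same at each iteration). Each agent $i$ sets $$\alpha_k^i=\begin{cases}1 & \text{if } J(w_k-\epsilon g_k^i)-J(w_k)\le-\lambda,\\ 0 & \text{otherwise,}\end{cases}$$ and the weights are updated by $$w_{k+1}=\begin{cases} w_k-\epsilon g_k^1 & \text{if }\alpha_k^1=1,\alpha_k^2=0,\\ w_k-\epsilon g_k^2 & \text{if }\alpha_k^1=0,\alpha_k^2=1,\\ w_k-\frac{\epsilon}{2}(g_k^1+g_k^2) & \text{if }\alpha_k^1=\alpha_k^2=1,\\ w_k & \text{if }\alpha_k^1=\alpha_k^2=0.\end{cases}$$ Then the total communication satisfies, almost surely with respect to the data collected, $$\limsup_{N\to\infty}\sum_{k=0}^{N}\max\{\alpha_k^1,\alpha_k^2\}\le\frac{J(w_0)-J(w^* )}{\lambda}.$$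
   Context: This models communication-efficient distributed linear regression: a server holds weights $w_k$, broadcasts them to two agents, each agent computes a local stochastic gradient $g_k^i$ of $J$ at $w_k$ from freshly collected data, and transmits it ($\alpha_k^i=1$) only when the resulting decrease of $J$ is at least $\lambda$. An iteration counts as a communication if at least one agent transmits. *)

(* Defs.v *)
From HB Require Import structures.
From mathcomp Require Import all_boot all_order all_algebra.
From mathcomp Require Import all_classical all_reals all_analysis.
Set Implicit Arguments. Unset Strict Implicit. Unset Printing Implicit Defensive.
Import Order.TTheory GRing.Theory Num.Theory.
Import numFieldNormedType.Exports.
Local Open Scope classical_set_scope.
Local Open Scope ring_scope.

(* Data (x, y) in R^n x R are random variables X (n components) and Y on a
   probability space (T0, P0); their joint law is mu.
   J w = 1/2 E[(y - x^T w)^2]  (w a row vector, x^T w = \sum_j x_j w_j). *)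
Definition Jobj {d0} {T0 : measurableType d0} {R : realType} {n : nat}
  (P0 : probability T0 R) (X : 'I_n -> T0 -> R) (Y : T0 -> R)
  (w : 'rV[R]_n) : R :=
  fine ('E_P0[(fun t => (Y t - \sum_(j < n) X j t * w ord0 j) ^+ 2)%R])%E / 2.

Definition second_moment {d0} {T0 : measurableType d0} {R : realType} {n : nat}
  (P0 : probability T0 R) (X : 'I_n -> T0 -> R) : 'M[R]_n :=
  \matrix_(i, j) fine ('E_P0[(fun t => X i t * X j t)%R])%E.

Definition grad {R : realType} {n : nat} (J : 'rV[R]_n -> R) (w : 'rV[R]_n)
  : 'rV[R]_n :=
  \row_(j < n) derive J w (delta_mx ord0 j : 'rV[R]_n).

Definition trig {R : realType} {n : nat} (J : 'rV[R]_n -> R) (eps lam : R)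
  (w g : 'rV[R]_n) : bool :=
  J (w - eps *: g) - J w <= - lam.

Definition update {R : realType} {n : nat} (J : 'rV[R]_n -> R) (eps lam : R)
  (w g1 g2 : 'rV[R]_n) : 'rV[R]_n :=
  match trig J eps lam w g1, trig J eps lam w g2 with
  | true, false => w - eps *: g1
  | false, true => w - eps *: g2
  | true, true => w - (eps / 2) *: (g1 + g2)
  | false, false => w
  end.

Fixpoint wseq {T : Type} {R : realType} {n : nat} (J : 'rV[R]_n -> R)
  (eps lam : R) (w0 : 'rV[R]_n) (g1 g2 : nat -> T -> 'rV[R]_n) (k : nat)
  (t : T) : 'rV[R]_n :=
  match k with
  | 0 => w0
  | k'.+1 => update J eps lam (wseq J eps lam w0 g1 g2 k' t)
                              (g1 k' t) (g2 k' t)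
  end.

Definition comm {T : Type} {R : realType} {n : nat} (J : 'rV[R]_n -> R)
  (eps lam : R) (w0 : 'rV[R]_n) (g1 g2 : nat -> T -> 'rV[R]_n) (k : nat)
  (t : T) : nat :=
  let w := wseq J eps lam w0 g1 g2 k t in
  maxn (trig J eps lam w (g1 k t)) (trig J eps lam w (g2 k t)).

Definition sigma_rv {d} {T : measurableType d} {R : realType} {n : nat}
  (v : T -> 'rV[R]_n) : set (set T) :=
  <<s [set A | exists (j : 'I_n) (B : set R),
          measurable B /\ A = (fun t => v t ord0 j) @^-1` B] >>.

Definition is_condexp {d} {T : measurableType d} {R : realType}
  (P : probability T R) (F : set (set T)) (Z h : T -> R) : Prop :=
  (forall B : set R, measurable B -> F (h @^-1` B)) /\
  P.-integrable setT (fun t => (h t)%:E) /\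
  P.-integrable setT (fun t => (Z t)%:E) /\
  (forall A, F A -> (\int[P]_(t in A) (h t)%:E = \int[P]_(t in A) (Z t)%:E)%E).

Definition cond_mean {d} {T : measurableType d} {R : realType} {n : nat}
  (P : probability T R) (F : set (set T)) (v m : T -> 'rV[R]_n) : Prop :=
  forall j : 'I_n, is_condexp P F (fun t => v t ord0 j) (fun t => m t ord0 j).

Definition cond_cov {d} {T : measurableType d} {R : realType} {n : nat}
  (P : probability T R) (F : set (set T)) (v m : T -> 'rV[R]_n)
  (G : 'M[R]_n) : Prop :=
  forall i j : 'I_n,
    is_condexp P F (fun t => (v t ord0 i - m t ord0 i) * (v t ord0 j - m t ord0 j))
                   (fun _ => G i j).

Definition cond_indep {d} {T : measurableType d} {R : realType} {n : nat}
  (P : probability T R) (F : set (set T)) (u v : T -> 'rV[R]_n) : Prop :=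
  forall A B : set T, sigma_rv u A -> sigma_rv v B ->
  forall hA hB : T -> R,
    is_condexp P F (\1_A) hA -> is_condexp P F (\1_B) hB ->
    is_condexp P F (\1_(A `&` B)) (fun t => hA t * hB t).

(* Main.v *)
Require Import Defs.
From HB Require Import structures.
From mathcomp Require Import all_boot all_order all_algebra.
From mathcomp Require Import all_classical all_reals all_analysis.
From mathcomp Require Import lra measurable_realfun.
Import Order.TTheory GRing.Theory Num.Theory.
Set Implicit Arguments. Unset Strict Implicit.
Import numFieldNormedType.Exports.
Local Open Scope classical_set_scope.
Local Open Scope ring_scope.

Definition sqi {d} {T : measurableType d} {R : realType} (P : probability T R) (f : T -> R) :=
  measurable_fun setT f /\ P.-integrable setT (fun t => (f t ^+ 2)%:E).

Lemma sqi_add d (T : measurableType d) (R : realType) (P : probability T R) f g :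
  sqi P f -> sqi P g -> sqi P (fun t => f t + g t).
Proof.
move=> [mf intf] [mg intg]; split; first exact: measurable_funD.
apply: (@le_integrable _ _ _ _ _ _ _ (fun t => (2 * f t ^+ 2 + 2 * g t ^+ 2)%:E)).
- by [].
- apply/(measurable_EFinP _ (fun t => (f t + g t) ^+ 2)); apply: measurable_funX.
  exact: measurable_funD.
- move=> t _; rewrite !gee0_abs ?lee_fin ?sqr_ge0 //; last first.
    by apply: addr_ge0; apply: mulr_ge0 => //; apply: sqr_ge0.
  have := sqr_ge0 (f t - g t); nra.
- under eq_fun do rewrite EFinD !EFinM.
  by apply: integrableD => //; apply: integrableZl.
Qed.

Lemma sqi_scale d (T : measurableType d) (R : realType) (P : probability T R) f c :
  sqi P f -> sqi P (fun t => c * f t).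
Proof.
move=> [mf intf]; split; first exact: measurable_funM.
under eq_fun do rewrite exprMn EFinM.
exact: integrableZl.
Qed.

Lemma sqi_sum d (T : measurableType d) (R : realType) (P : probability T R) n (F : 'I_n -> T -> R) :
  (forall j, sqi P (F j)) -> sqi P (fun t => \sum_(j < n) F j t).
Proof.
move=> h; elim: (index_enum _) => [|j s IH].
- under eq_fun do rewrite big_nil.
  split; first exact: measurable_cst.
  under eq_fun do rewrite expr0n /=.
  exact: integrable0.
- under eq_fun do rewrite big_cons.
  exact: sqi_add.
Qed.

Lemma Jmid (R : realType) n d0 (T0 : measurableType d0) (P0 : probability T0 R)
  (X : 'I_n -> T0 -> R) (Y : T0 -> R)
  (hX : forall j, sqi P0 (X j)) (hY : sqi P0 Y) (a b c : 'rV[R]_n) :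
  (forall j, c ord0 j = (a ord0 j + b ord0 j) / 2) ->
  Jobj P0 X Y c <= (Jobj P0 X Y a + Jobj P0 X Y b) / 2.
Proof.
move=> hc.
pose h (w : 'rV[R]_n) t := Y t - \sum_(j < n) X j t * w ord0 j.
have hs w : sqi P0 (h w).
  have := sqi_add hY (sqi_scale (-1) (sqi_sum (fun j => sqi_scale (w ord0 j) (hX j)))).
  have -> // : (fun t => Y t + -1 * \sum_(j < n) w ord0 j * X j t) = h w.
  by apply/funext => t; rewrite /h mulN1r; congr (_ - _); apply: eq_bigr => j _; rewrite mulrC.
have hct t : h c t = (h a t + h b t) / 2.
  have : \sum_(j < n) X j t * c ord0 j =
     (\sum_(j < n) X j t * a ord0 j + \sum_(j < n) X j t * b ord0 j) / 2.
    rewrite -big_split mulr_suml /=; apply: eq_bigr => j _; rewrite hc; lra.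
  rewrite /h => ->; lra.
rewrite /Jobj unlock /=.
have [_ ia] := hs a; have [_ ib] := hs b; have [_ ic] := hs c.
have fa := integrable_fin_num measurableT ia; have fb := integrable_fin_num measurableT ib;
have fc := integrable_fin_num measurableT ic.
have H : (\int[P0]_x ((h c x) ^+ 2)%:E <=
   (2^-1)%:E * (\int[P0]_x ((h a x) ^+ 2)%:E + \int[P0]_x ((h b x) ^+ 2)%:E))%E.
  have iab := integrableD measurableT ia ib.
  rewrite -(integralD measurableT ia ib) -(integralZl measurableT iab).
  apply: le_integral => //; first exact: integrableZl.
  move=> x _; rewrite -EFinD -EFinM lee_fin hct.
  have := sqr_ge0 (h a x - h b x); lra.
rewrite -(fineK fa) -(fineK fb) -(fineK fc) -EFinD -EFinM lee_fin in H.
rewrite /h in H; lra.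
Qed.

Theorem theorem2 (R : realType) (n : nat)
  (* data (x, y) on a probability space; joint law mu *)
  (d0 : measure_display) (T0 : measurableType d0) (P0 : probability T0 R)
  (X : 'I_n -> {RV P0 >-> R}) (Y : {RV P0 >-> R})
  (hX2 : forall j, P0.-integrable setT (fun t => (X j t ^+ 2)%:E))
  (hY2 : P0.-integrable setT (fun t => (Y t ^+ 2)%:E))
  (* optimal solution w* *)
  (wstar : 'rV[R]_n)
  (hopt : forall w, Jobj P0 (fun j => X j) Y wstar <= Jobj P0 (fun j => X j) Y w)
  (* stepsize *)
  (eps : R) (heps : 0 < eps)
  (hstep : forall a : R, eigenvalue (second_moment P0 (fun j => X j)) a ->
             (1 - eps * a) ^+ 2 < 1)
  (lam : R) (hlam : 0 < lam) (w0 : 'rV[R]_n)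
  (* stochastic gradients of the two agents on a probability space *)
  (d : measure_display) (T : measurableType d) (P : probability T R)
  (g1 g2 : nat -> T -> 'rV[R]_n)
  (hg1m : forall k j, measurable_fun setT (fun t => g1 k t ord0 j))
  (hg2m : forall k j, measurable_fun setT (fun t => g2 k t ord0 j))
  (G : 'M[R]_n) :
  let J := Jobj P0 (fun j => X j) Y in
  let w := wseq J eps lam w0 g1 g2 in
  (forall k, cond_mean P (sigma_rv (w k)) (g1 k) (fun t => grad J (w k t))) ->
  (forall k, cond_mean P (sigma_rv (w k)) (g2 k) (fun t => grad J (w k t))) ->
  (forall k, cond_cov P (sigma_rv (w k)) (g1 k) (fun t => grad J (w k t)) G) ->
  (forall k, cond_cov P (sigma_rv (w k)) (g2 k) (fun t => grad J (w k t)) G) ->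
  (forall k, cond_indep P (sigma_rv (w k)) (g1 k) (g2 k)) ->
  {ae P, forall t,
    (limn_esup (fun N => ((\sum_(k < N.+1) comm J eps lam w0 g1 g2 k t)%:R : R)%:E)
      <= ((J w0 - J wstar) / lam)%:E)%E}.

Proof.
move=> J w hm1 hm2 hc1 hc2 hi; apply: aeW => t.
have hsX j : sqi P0 (X j) by split; [exact: measurable_funPT | exact: hX2].
have hsY : sqi P0 Y by split; [exact: measurable_funPT | exact: hY2].
have trigE v g : trig J eps lam v g -> J (v - eps *: g) <= J v - lam.
  by rewrite /trig; lra.
have step k : J (w k.+1 t) + lam * (comm J eps lam w0 g1 g2 k t)%:R <= J (w k t).
  have -> : w k.+1 t = update J eps lam (w k t) (g1 k t) (g2 k t) by [].
  rewrite /comm -/(w k t) /update.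
  case E1: (trig J eps lam (w k t) (g1 k t)); case E2: (trig J eps lam (w k t) (g2 k t)); rewrite /maxn /=.
  - have := trigE _ _ E1; have := trigE _ _ E2.
    have := Jmid hsX hsY (a := w k t - eps *: g1 k t) (b := w k t - eps *: g2 k t)
      (c := w k t - (eps / 2) *: (g1 k t + g2 k t)).
    move=> /(_ _) H; have {}H := H (fun j => ltac:(rewrite !mxE; lra)).
    rewrite -/J in H; lra.
  - have := trigE _ _ E1; rewrite /J; lra.
  - have := trigE _ _ E2; rewrite /J; lra.
  - lra.
have S N : J (w N t) + lam * (\sum_(k < N) comm J eps lam w0 g1 g2 k t)%:R <= J w0.
  elim: N => [|N IH]; first by rewrite big_ord0 /=; lra.
  rewrite big_ord_recr /= natrD; have := step N; lra.
have B N : ((\sum_(k < N) comm J eps lam w0 g1 g2 k t)%:R : R) <= (J w0 - J wstar) / lam.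
  rewrite ler_pdivlMr //; have := S N; have := hopt (w N t); rewrite /J; lra.
rewrite limn_esup_lim; apply: lime_le; first exact: is_cvg_esups.
near=> N; apply: ge_ereal_sup => _ [k _ <-]; rewrite lee_fin; exact: B.
Unshelve. all: by end_near.
Qed.
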